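(* Let $b\ge1$, $1\le a\le b$, $t\ge0$ be integers and $d=2t+1$. Let $\nu=\nu^{\text{on-diag}}+\nu^{\text{off-diag}}$, where $\nu^{\text{on-diag}}$ is the number of pairs $(k,q)$ with $k$ odd, $1\le k<d$, $0\le q\le k$, $q\equiv0\pmod{2b}$, and $\nu^{\text{off-diag}}$ is the number of pairs $(k,q)$ with $k$ odd, $1\le k<d$, $-k\le q\le k$, $q\equiv2a-1\pmod{2b}$. Then $\nu=\tfrac{3}{2b}t^2+\tfrac{2+b}{2b}t+\tfrac{2a(a-b-1)+b+1}{2b}+c$, where $c=\tfrac{1}{2b}\Big([t+1-a]_b^2+\big(b-2-2[t-a]_b\big)[t+1-a]_b+[a+t]_b\big(b-2-2[a+t-1]_b+[a+t]_b\big)+[t]_b^2+\big(b-1-2[t-\tfrac12]_b\big)[t]_b\Big)$, and $0\le c\le 3b$.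
   Context: For real $x$ and positive integer $y$, $[x]_y:=x\bmod y=x-y\lfloor x/y\rfloor$. The quantity $\nu$ is the number of quadratic Knill–Laflamme conditions a real $(\mathsf{BD}_{2b},\delta_a)$-covariant spin code must satisfy to have distance $d$. *)

(* Defs.v *)
From HB Require Import structures.
From mathcomp Require Import all_boot all_order all_algebra.
Set Implicit Arguments. Unset Strict Implicit. Unset Printing Implicit Defensive.
Import Order.TTheory GRing.Theory Num.Theory.
Local Open Scope ring_scope.

Definition rmod (x : rat) (y : nat) : rat :=
  x - y%:R * (Num.floor (x / y%:R))%:~R.

Definition nu_on (b d : nat) : nat :=
  (\sum_(0 <= k < d | odd k && (1 <= k)%N)
     \sum_(0 <= q < k.+1 | (2 * b %| q)%N) 1)%N.

(* number of pairs (k,q), k odd, 1 <= k < d, -k <= q <= k, q = 2a-1 mod 2b;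
   q is written as j - k with 0 <= j <= 2k *)
Definition nu_off (a b d : nat) : nat :=
  (\sum_(0 <= k < d | odd k && (1 <= k)%N)
     \sum_(0 <= j < (2 * k).+1 |
        ((2 * b)%N%:Z %| ((j%:Z - k%:Z) - (2 * a%:Z - 1))%R)%Z) 1)%N.

Definition nu (a b d : nat) : nat := (nu_on b d + nu_off a b d)%N.

(* Main.v *)
Require Import Defs.
From HB Require Import structures.
From mathcomp Require Import all_boot all_order all_algebra zify ring lra.
Import Order.TTheory GRing.Theory Num.Theory.
Local Open Scope ring_scope.

Lemma divz_uniq {x q m : int} : 0 < m -> q * m <= x < q * m + m -> (x %/ m)%Z = q.
Proof.
move=> m0 H.
have -> : x = q * m + (x - q * m) by ring.
rewrite divzMDl ?gt_eqF // divz_small ?addr0 //.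
apply/andP; split; first lia.
lia.
Qed.

Lemma modz_uniq {x q m : int} : 0 < m -> q * m <= x < q * m + m -> (x %% m)%Z = x - q * m.
Proof.
move=> m0 H; have := divz_eq x m; rewrite (divz_uniq m0 H); lia.
Qed.

Lemma divzS1 {x m : int} : 0 < m ->
  ((x + 1) %/ m)%Z = (x %/ m)%Z + (if (m %| x + 1)%Z then 1 else 0).
Proof.
move=> m0.
have e := divz_eq x m; have h1 := modz_ge0 x (lt0r_neq0 m0); have h2 := ltz_pmod x m0.
set q := (x %/ m)%Z in e *; set r := (x %% m)%Z in e h1 h2 *.
have [hr|hr] := boolP (r + 1 == m).
  have E : x + 1 = (q + 1) * m by lia.
  rewrite E dvdz_mull ?dvdzz // (divz_uniq (q := q + 1)) //; lia.
have D : ((x + 1) %/ m)%Z = q by apply: divz_uniq => //; lia.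
case: ifP => hd; last by rewrite D addr0.
have := divzK hd; rewrite D; lia.
Qed.

Lemma count_int (m c : int) (n : nat) : 0 < m ->
  ((\sum_(0 <= j < n | (m %| (j%:Z + c)%R)%Z) 1)%N)%:Z
  = ((n%:Z - 1 + c) %/ m)%Z - ((c - 1) %/ m)%Z.
Proof.
move=> m0; elim: n => [|n IH].
  by rewrite big_geq // sub0r (addrC (-1)) subrr.
rewrite big_mkcond big_nat_recr //= -big_mkcond PoszD IH.
have := divzS1 (x := n%:Z - 1 + c) m0.
have -> : n%:Z - 1 + c + 1 = n%:Z + c by ring.
have -> : n.+1%:Z - 1 + c = n%:Z + c by lia.
case: ifP => _ ->; lia.
Qed.
Definition g (b : nat) (y : int) : int := (y %% b)%Z * (b%:Z - (y %% b)%Z).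

Lemma gS (b : nat) (y : int) : (0 < b)%N ->
  g b (y + 1) = g b y + b%:Z - 1 - 2 * (y %% b)%Z.
Proof.
move=> b0; have m0 : 0 < b%:Z by lia.
have e := divz_eq y b; have h1 := modz_ge0 y (lt0r_neq0 m0); have h2 := ltz_pmod y m0.
rewrite /g.
set q := (y %/ b)%Z in e *; set r := (y %% b)%Z in e h1 h2 *.
have [hr|hr] := boolP (r + 1 == b%:Z).
  rewrite (modz_uniq (q := q + 1)) //; last lia.
  have -> : y + 1 - (q + 1) * b = 0 by lia.
  lia.
rewrite (modz_uniq (q := q)) //; last lia.
have -> : y + 1 - q * b = r + 1 by lia.
ring.
Qed.

Lemma sum_rec2 (t : nat) (F : nat -> nat) :
  (\sum_(0 <= k < (2 * t + 1).+2 | odd k && (1 <= k)%N) F k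
  = \sum_(0 <= k < 2 * t + 1 | odd k && (1 <= k)%N) F k + F (2 * t + 1))%N.
Proof.
rewrite big_mkcond big_nat_recr // big_nat_recr //= -big_mkcond.
have -> : odd (2 * t + 1) = true by rewrite oddD oddM.
by rewrite addn1 /= addn0.
Qed.

Lemma nu_rec (a b t : nat) :
  nu a b (2 * t.+1 + 1) = (nu a b (2 * t + 1)
   + \sum_(0 <= q < (2 * t + 1).+1 | (2 * b %| q)%N) 1
   + \sum_(0 <= j < (2 * (2 * t + 1)).+1 |
        ((2 * b)%N%:Z %| ((j%:Z - (2 * t + 1)%N%:Z) - (2 * a%:Z - 1))%R)%Z) 1)%N.
Proof.
have -> : (2 * t.+1 + 1 = (2 * t + 1).+2)%N by lia.
rewrite /nu /nu_on /nu_off !sum_rec2; lia.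
Qed.

Lemma on_count (b t : nat) : (0 < b)%N ->
  ((\sum_(0 <= q < (2 * t + 1).+1 | (2 * b %| q)%N) 1)%N)%:Z
  = ((t%:Z) %/ b)%Z + 1.
Proof.
move=> b0; have m0 : 0 < (2 * b)%N%:Z by lia.
rewrite (eq_bigl (fun j => ((2 * b)%N%:Z %| (j%:Z + 0)%R)%Z)); last first.
  by move=> j; rewrite addr0.
rewrite count_int //.
have e := divz_eq t b; have h1 := modz_ge0 t (lt0r_neq0 (x := b%:Z) ltac:(lia)).
have h2 := ltz_pmod t (ltac:(lia) : 0 < b%:Z).
rewrite (divz_uniq (q := (t %/ b)%Z)) //; last lia.
rewrite (divz_uniq (x := 0 - 1) (q := -1)) //; try lia.
Qed.

Lemma off_count (a b t : nat) : (0 < b)%N ->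
  ((\sum_(0 <= j < (2 * (2 * t + 1)).+1 |
        ((2 * b)%N%:Z %| ((j%:Z - (2 * t + 1)%N%:Z) - (2 * a%:Z - 1))%R)%Z) 1)%N)%:Z
  = ((t%:Z + 1 - a%:Z) %/ b)%Z + ((a%:Z + t%:Z) %/ b)%Z + 1.
Proof.
move=> b0; have m0 : 0 < (2 * b)%N%:Z by lia.
rewrite (eq_bigl (fun j => ((2 * b)%N%:Z %| (j%:Z + (- 2 * t%:Z - 2 * a%:Z))%R)%Z)); last first.
  move=> j; congr (_ %| _)%Z; lia.
rewrite count_int //.
have bz : 0 < b%:Z by lia.
have e1 := divz_eq (t%:Z + 1 - a%:Z) b; have h11 := modz_ge0 (t%:Z + 1 - a%:Z) (lt0r_neq0 bz).
have h12 := ltz_pmod (t%:Z + 1 - a%:Z) bz.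
have e2 := divz_eq (a%:Z + t%:Z) b; have h21 := modz_ge0 (a%:Z + t%:Z) (lt0r_neq0 bz).
have h22 := ltz_pmod (a%:Z + t%:Z) bz.
rewrite (divz_uniq (m := (2 * b)%N%:Z) (q := ((t%:Z + 1 - a%:Z) %/ b)%Z)) //; last lia.
rewrite (divz_uniq (m := (2 * b)%N%:Z) (q := - ((a%:Z + t%:Z) %/ b)%Z - 1)) //; try lia.
Qed.

Lemma main_int (a b t : nat) : (1 <= b)%N -> (1 <= a)%N -> (a <= b)%N ->
  (2 * b)%N%:Z * (nu a b (2 * t + 1))%:Z =
  3 * t%:Z ^+ 2 + (2 + b%:Z) * t%:Z + 2 * a%:Z * (a%:Z - b%:Z - 1) + b%:Z + 1
  + g b (t%:Z + 1 - a%:Z) + g b (a%:Z + t%:Z) + g b t%:Z.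
Proof.
move=> hb ha hab; have bz : 0 < b%:Z by lia.
elim: t => [|t IH].
  have -> : nu a b (2 * 0 + 1) = 0%N.
    by rewrite muln0 add0n /nu /nu_on /nu_off big_mkcond big_nat1 /= big_mkcond big_nat1.
  rewrite /g.
  have -> : ((0%N%:Z) %% b)%Z = 0 by rewrite (modz_uniq (q := 0)) //; lia.
  have -> : ((a%:Z + 0%N%:Z) %% b)%Z = a%:Z * (a < b)%N.
    have [hl|hl] := ltnP a b.
      by rewrite (modz_uniq (q := 0)) //; lia.
    by rewrite (modz_uniq (q := 1)) //; lia.
  have -> : ((0%N%:Z + 1 - a%:Z) %% b)%Z = (b%:Z + 1 - a%:Z) * (1 < a)%N.
    have [hl|hl] := ltnP 1 a.
      by rewrite (modz_uniq (q := -1)) //; lia.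
    by rewrite (modz_uniq (q := 0)) //; lia.
  case: (ltnP a b) => h1; case: (ltnP 1 a) => h2 /=; try lia.
  - have -> : a = 1%N by lia. lia.
  - have -> : a = b by lia. lia.
  - have -> : a = b by lia. have -> : b = 1%N by lia. lia.
have -> : t.+1%:Z + 1 - a%:Z = (t%:Z + 1 - a%:Z) + 1 by lia.
have -> : a%:Z + t.+1%:Z = (a%:Z + t%:Z) + 1 by lia.
have -> : t.+1%:Z = t%:Z + 1 by lia.
rewrite !gS // nu_rec !PoszD mulrDr mulrDr IH on_count // off_count //.
have e1 := divz_eq (t%:Z + 1 - a%:Z) b.
have e2 := divz_eq (a%:Z + t%:Z) b.
have e3 := divz_eq t%:Z b.
lia.
Qed.

Lemma nz (n : nat) : (n%:Z)%:~R = n%:R :> rat.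
Proof. by []. Qed.

Lemma rmodE {x : rat} {q : int} {b : nat} : (0 < b)%N ->
  q%:~R * b%:R <= x < q%:~R * b%:R + b%:R -> rmod x b = x - b%:R * q%:~R.
Proof.
move=> b0 /andP[h1 h2]; have B0 : 0 < b%:R :> rat by rewrite ltr0n.
rewrite /rmod (@floor_def _ _ q) //.
by rewrite intrD ler_pdivlMr // ltr_pdivrMr // h1 /= mulrDl mul1r.
Qed.

Lemma rmod_int (y : int) (b : nat) : (0 < b)%N -> rmod (y%:~R) b = ((y %% b)%Z)%:~R.
Proof.
move=> b0; have bz : 0 < b%:Z by lia.
have e := divz_eq y b; have h1 := modz_ge0 y (lt0r_neq0 bz); have h2 := ltz_pmod y bz.
have E : y%:~R = ((y %/ b)%Z)%:~R * b%:R + ((y %% b)%Z)%:~R :> rat.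
  by rewrite {1}e intrD intrM nz.
have H1 : 0 <= ((y %% b)%Z)%:~R :> rat by rewrite ler0z.
have H2 : ((y %% b)%Z)%:~R < b%:R :> rat by rewrite -nz ltr_int.
rewrite (rmodE (q := (y %/ b)%Z)) //; first lra.
apply/andP; split; lra.
Qed.

Lemma rmod_half (t : int) (b : nat) : (0 < b)%N ->
  rmod (t%:~R - 1 / 2) b = (((t - 1) %% b)%Z)%:~R + 1 / 2.
Proof.
move=> b0; have bz : 0 < b%:Z by lia.
set y := t - 1.
have e := divz_eq y b; have h1 := modz_ge0 y (lt0r_neq0 bz); have h2 := ltz_pmod y bz.
have E : t%:~R = ((y %/ b)%Z)%:~R * b%:R + ((y %% b)%Z)%:~R + 1 :> rat.
  have -> : t = y + 1 by rewrite /y; ring.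
  by rewrite {1}e !intrD intrM nz.
have H1 : 0 <= ((y %% b)%Z)%:~R :> rat by rewrite ler0z.
have H2 : ((y %% b)%Z)%:~R + 1 <= b%:R :> rat.
  by rewrite -nz -[1]/(1%:~R) -intrD ler_int; lia.
rewrite (rmodE (q := (y %/ b)%Z)) //; first lra.
apply/andP; split; lra.
Qed.

Lemma Pg (y : int) (b : nat) : (0 < b)%N ->
  let u : rat := ((y %% b)%Z)%:~R in
  let v : rat := (((y - 1) %% b)%Z)%:~R in
  u ^+ 2 + (b%:R - 2 - 2 * v) * u = (g b y)%:~R.
Proof.
move=> b0 u v; have bz : 0 < b%:Z by lia.
suff : ((y %% b)%Z) ^+ 2 + (b%:Z - 2 - 2 * ((y - 1) %% b)%Z) * (y %% b)%Z = g b y.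
  move=> <-; rewrite /u /v; move: ((y %% b)%Z) ((y - 1) %% b)%Z => r s.
  by rewrite intrD intrM !intrB intrM -nz rmorphXn.
have e := divz_eq y b; have h1 := modz_ge0 y (lt0r_neq0 bz); have h2 := ltz_pmod y bz.
rewrite /g; set r := (y %% b)%Z in e h1 h2 *.
have [hr|hr] := boolP (r == 0).
  by rewrite (eqP hr); ring.
rewrite (modz_uniq (q := (y %/ b)%Z)) //; last lia.
have -> : y - 1 - (y %/ b)%Z * b = r - 1 by lia.
ring.
Qed.

Lemma g_bnd (y : int) (b : nat) : (0 < b)%N -> 0 <= g b y <= b%:Z * b%:Z.
Proof.
move=> b0; have bz : 0 < b%:Z by lia.
have h1 := modz_ge0 y (lt0r_neq0 bz); have h2 := ltz_pmod y bz.
rewrite /g; set r := (y %% b)%Z in h1 h2 *.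
apply/andP; split; nia.
Qed.

Lemma castM (a b t n : nat) (z1 z2 z3 : int) :
  (2 * b)%N%:Z * n%:Z =
  3 * t%:Z ^+ 2 + (2 + b%:Z) * t%:Z + 2 * a%:Z * (a%:Z - b%:Z - 1) + b%:Z + 1
  + z1 + z2 + z3 ->
  2 * b%:R * n%:R = 3 * t%:R ^+ 2 + (2 + b%:R) * t%:R + 2 * a%:R * (a%:R - b%:R - 1)
   + b%:R + 1 + z1%:~R + z2%:~R + z3%:~R :> rat.
Proof.
move=> /(congr1 (fun z : int => z%:~R : rat)); cbv beta.
rewrite !intrD !intrM !intrB !nz natrM => ->.
ring.
Qed.

Theorem theoremS3 (a b t : nat) (hb : (1 <= b)%N) (ha : (1 <= a)%N)
    (hab : (a <= b)%N) :
  let d := (2 * t + 1)%N in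
  let B : rat := b%:R in
  let A : rat := a%:R in
  let T : rat := t%:R in
  let c : rat :=
    (1 / (2 * B)) *
      (rmod (T + 1 - A) b ^+ 2
       + (B - 2 - 2 * rmod (T - A) b) * rmod (T + 1 - A) b
       + rmod (A + T) b * (B - 2 - 2 * rmod (A + T - 1) b + rmod (A + T) b)
       + rmod T b ^+ 2
       + (B - 1 - 2 * rmod (T - 1 / 2) b) * rmod T b) in
  (nu a b d)%:R = 3 / (2 * B) * T ^+ 2 + (2 + B) / (2 * B) * T
                  + (2 * A * (A - B - 1) + B + 1) / (2 * B) + c
  /\ 0 <= c <= 3 * B.
Proof.
move=> d B A T c.
have b0 : (0 < b)%N by [].
have B0 : 0 < B by rewrite ltr0n.
have R1 : rmod (T + 1 - A) b = ((t%:Z + 1 - a%:Z) %% b)%Z%:~R.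
  by rewrite -rmod_int //; congr rmod; rewrite /T /A intrB intrD !nz.
have R2 : rmod (T - A) b = ((t%:Z + 1 - a%:Z - 1) %% b)%Z%:~R.
  rewrite -rmod_int //; congr rmod; rewrite /T /A !intrB intrD !nz; ring.
have R3 : rmod (A + T) b = ((a%:Z + t%:Z) %% b)%Z%:~R.
  by rewrite -rmod_int //; congr rmod; rewrite /T /A intrD !nz.
have R4 : rmod (A + T - 1) b = ((a%:Z + t%:Z - 1) %% b)%Z%:~R.
  by rewrite -rmod_int //; congr rmod; rewrite /T /A intrB intrD !nz.
have R5 : rmod T b = ((t%:Z) %% b)%Z%:~R by rewrite -rmod_int.
have R6 : rmod (T - 1 / 2) b = ((t%:Z - 1) %% b)%Z%:~R + 1 / 2 by rewrite -rmod_half.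
have P1 := @Pg (t%:Z + 1 - a%:Z) b b0; rewrite /= in P1.
have P2 := @Pg (a%:Z + t%:Z) b b0; rewrite /= in P2.
have P3 := @Pg t%:Z b b0; rewrite /= in P3.
set G1 := (g b (t%:Z + 1 - a%:Z))%:~R : rat in P1 *.
set G2 := (g b (a%:Z + t%:Z))%:~R : rat in P2 *.
set G3 := (g b t%:Z)%:~R : rat in P3 *.
have Hc : c = 1 / (2 * B) * (G1 + G2 + G3).
  rewrite /c R1 R2 R4 R3 R5 R6; congr (_ * _); lra.
have M := @main_int a b t hb ha hab.
have M' : 2 * B * (nu a b d)%:R = 3 * T ^+ 2 + (2 + B) * T + 2 * A * (A - B - 1) + B + 1 + G1 + G2 + G3.
  exact: castM M.
have N : (nu a b d)%:R = (3 * T ^+ 2 + (2 + B) * T + 2 * A * (A - B - 1) + B + 1 + G1 + G2 + G3) / (2 * B).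
  by rewrite -M'; field; rewrite lt0r_neq0.
have gb : forall y, 0 <= ((g b y)%:~R : rat) <= B * B.
  move=> y; have /andP[h1 h2] := @g_bnd y b b0.
  by rewrite ler0z h1 /= /B -!nz -intrM ler_int.
have g1 := gb (t%:Z + 1 - a%:Z); have g2 := gb (a%:Z + t%:Z); have g3 := gb t%:Z.
rewrite -/G1 -/G2 -/G3 in g1 g2 g3.
split.
  rewrite N Hc; field; rewrite lt0r_neq0 //.
rewrite Hc mul1r (mulrC _^-1) -/(_ / _).
apply/andP; split.
  apply: divr_ge0; lra.
rewrite ler_pdivrMr; last lra.
nra.
Qed.
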